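(* Let $\Omega$ be a finite set, let $\mathcal K$ be a finite nonempty set of gambles on $\Omega$, and let $\underline{P}_{\mathcal K}$ be a coherent lower prevision on $\mathcal K$. Let $\mathcal M=\{P: P(f)\ge\underline{P}_{\mathcal K}(f)\ \forall f\in\mathcal K\}$ be its credal set and $\underline{E}(h)=\min_{P\in\mathcal M}P(h)$ its natural extension. For $f\in\mathcal K$ let $\mathcal M_f=\{P\in\mathcal M: P(f)=\underline{E}(f)\}$ and let $\mathcal E_f$ be the set of extreme points of $\mathcal M_f$. Let $\underline{P}$ and $\underline{P}'$ be two coherent lower previsions on the set of all gambles, both agreeing with $\underline{P}_{\mathcal K}$ on $\mathcal K$. Then for every gamble $h$, $$|\underline{P}(h)-\underline{P}'(h)|\le\min_{f\in\mathcal K}\max_{E\in\mathcal E_f}E(h)-\underline{E}(h).$$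
   Context: Gambles are real-valued functions on the finite set $\Omega$. A linear prevision is the expectation functional $P(f)=\sum_{x}p(x)f(x)$ of a probability mass vector $p$. A lower prevision $\underline{P}$ on a set of gambles $\mathcal H$ is coherent if there is a nonempty closed convex set $\mathcal C$ of linear previsions with $\underline{P}(f)=\min_{P\in\mathcal C}P(f)$ for all $f\in\mathcal H$. *)

(* Defs.v *)
From mathcomp Require Import all_boot all_order all_algebra.
From mathcomp Require Import all_classical all_reals all_analysis.
Set Implicit Arguments. Unset Strict Implicit. Unset Printing Implicit Defensive.
Import Order.TTheory GRing.Theory Num.Theory numFieldNormedType.Exports.
Local Open Scope classical_set_scope.
Local Open Scope ring_scope.

(* Omega is a finite type T; gambles are functions T -> R.
   A linear prevision is identified with its probability mass vector p : T -> R. *)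

Definition gamble (T : finType) (R : realType) := T -> R.

Definition pmf (T : finType) (R : realType) (p : T -> R) : Prop :=
  (forall x, 0 <= p x) /\ \sum_(x : T) p x = 1.

Definition lprev (T : finType) (R : realType) (p : T -> R) (f : T -> R) : R :=
  \sum_(x : T) p x * f x.

Definition mix (T : finType) (R : realType) (t : R) (p q : T -> R) : T -> R :=
  fun x => t * p x + (1 - t) * q x.

Definition convex_set (T : finType) (R : realType) (C : set (T -> R)) : Prop :=
  forall p q t, C p -> C q -> 0 <= t <= 1 -> C (mix t p q).

(* closedness w.r.t. the product (pointwise = Euclidean, T finite) topology *)
Definition closed_set (T : finType) (R : realType) (C : set (T -> R)) : Prop :=
  @closed (@prod_topology T (fun _ : T => R)) C.

(* lowP is a coherent lower prevision on the set of gambles H: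
   there is a nonempty closed convex set C of linear previsions with
   lowP f = min_{P in C} P(f) for every f in H (the min is attained). *)
Definition coherent_on (T : finType) (R : realType)
    (H : set (T -> R)) (lowP : (T -> R) -> R) : Prop :=
  exists C : set (T -> R),
    [/\ C `<=` @pmf T R, C !=set0, closed_set C, convex_set C &
      forall f, H f ->
        (exists2 p, C p & lprev p f = lowP f) /\
        (forall p, C p -> lowP f <= lprev p f)].

Definition credal (T : finType) (R : realType)
    (K : set (T -> R)) (lowP : (T -> R) -> R) : set (T -> R) :=
  [set p | pmf p /\ forall f, K f -> lowP f <= lprev p f].

(* natural extension E(h) = min_{P in M} P(h) (written as an infimum;
   M is nonempty and compact, so this is the minimum) *)
Definition natext (T : finType) (R : realType)
    (K : set (T -> R)) (lowP : (T -> R) -> R) (h : T -> R) : R :=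
  inf [set lprev p h | p in credal K lowP].

Definition credal_face (T : finType) (R : realType)
    (K : set (T -> R)) (lowP : (T -> R) -> R) (f : T -> R) : set (T -> R) :=
  [set p | credal K lowP p /\ lprev p f = natext K lowP f].

Definition extreme_points (T : finType) (R : realType) (S : set (T -> R))
    : set (T -> R) :=
  [set p | S p /\ forall q r t, S q -> S r -> 0 < t < 1 ->
       p = mix t q r -> q = r].

(* Main.v *)
Require Import Defs.
From mathcomp Require Import all_boot all_order all_algebra.
From mathcomp Require Import all_classical all_reals all_analysis.
From mathcomp Require Import lra.
Import Order.TTheory GRing.Theory Num.Theory numFieldNormedType.Exports.
Local Open Scope classical_set_scope.
Local Open Scope ring_scope.
Local Notation pmf := Defs.pmf.

Section Aux.
Variables (R : realType) (T : finType).
Notation PT := (@prod_topology T (fun _ : T => R)).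

Lemma lprev_mix t (a b g : T -> R) :
  lprev (mix t a b) g = t * lprev a g + (1 - t) * lprev b g.
Proof.
rewrite /lprev /mix !mulr_sumr -big_split /=; apply: eq_bigr => x _.
by rewrite mulrDl !mulrA.
Qed.

Lemma pmf_le1 (p : T -> R) x : pmf p -> 0 <= p x <= 1.
Proof.
move=> [p0 p1]; rewrite p0 /= -p1 (bigD1 x) //= lerDl.
by apply: sumr_ge0 => i _; exact: p0.
Qed.

Lemma lprev_bound (p : T -> R) h : pmf p -> `|lprev p h| <= \sum_x `|h x|.
Proof.
move=> pp; rewrite /lprev; apply: le_trans (ler_norm_sum _ _ _) _.
apply: ler_sum => x _; rewrite normrM.
have /andP[h0 h1] := @pmf_le1 p x pp.
rewrite ger0_norm //; rewrite -[leRHS]mul1r; apply: ler_wpM2r => //.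
Qed.

Lemma lprev_cont (g : T -> R) : continuous (fun p : PT => lprev p g).
Proof.
rewrite /lprev; elim: (index_enum T) => [|x s IH].
  have -> : (fun p : PT => \sum_(x <- [::]) p x * g x) = fun=> 0.
    by apply: funext => p; rewrite big_nil.
  exact: cst_continuous.
have -> : (fun p : PT => \sum_(y <- x :: s) p y * g y) =
  (fun p : PT => p x * g x) + (fun p : PT => \sum_(y <- s) p y * g y).
  by apply: funext => p; rewrite big_cons.
move=> p; apply: continuousD; last exact: IH.
apply: continuousM; last exact: cst_continuous.
exact: proj_continuous.
Qed.

Lemma closed_lin_le (g : T -> R) c : closed [set p : PT | c <= lprev p g].
Proof.
have H := (@preimage_closed PT R (fun p : PT => lprev p g) [set x | c <= x] (fun x _ => lprev_cont g x) (@closed_ge R c)).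
exact H.
Qed.

Lemma closed_lin_eq (g : T -> R) c : closed [set p : PT | lprev p g = c].
Proof.
have H := (@preimage_closed PT R (fun p : PT => lprev p g) [set x | x = c] (fun x _ => lprev_cont g x) (@closed_eq R c)).
exact H.
Qed.


Definition ind (x : T) : T -> R := fun y => (y == x)%:R.

Lemma lprev_ind (p : T -> R) x : lprev p (ind x) = p x.
Proof.
rewrite /lprev (bigD1 x) //= /ind eqxx mulr1 big1 ?addr0 //.
by move=> y /negbTE ->; rewrite mulr0.
Qed.

Lemma compact_box : compact [set p : PT | forall x, `[0, 1]%classic (p x)].
Proof.
apply: (@tychonoff T (fun _ => R) (fun _ => `[0, 1]%classic)) => x; exact: segment_compact.
Qed.

Definition face (S S' : set PT) := forall a b t, S a -> S b -> 0 < t < 1 ->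
  S' (mix t a b) -> S' a /\ S' b.

Lemma argmax_step (S : set PT) g : compact S -> S !=set0 ->
  exists m, [/\ compact (S `&` [set p | lprev p g = m]),
    (S `&` [set p | lprev p g = m]) !=set0,
    face S (S `&` [set p | lprev p g = m]) &
    forall p, S p -> lprev p g <= m].
Proof.
move=> cS S0.
have [c cS' cmax] := @compact_EVT_max PT R (fun p => lprev p g) S S0 cS
  (continuous_subspaceT (lprev_cont g)).
have Sc : S c by move: cS'; rewrite inE.
exists (lprev c g); split.
- exact: compact_closedI cS (closed_lin_eq g _).
- by exists c.
- move=> a b t Sa Sb /andP[t0 t1] [_ /=]; rewrite lprev_mix => e.
  have ha : lprev a g <= lprev c g by apply: cmax; rewrite inE.
  have hb : lprev b g <= lprev c g by apply: cmax; rewrite inE.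
  have ea : lprev a g = lprev c g by nra.
  have eb : lprev b g = lprev c g by nra.
  by split; split.
- by move=> p Sp; apply: cmax; rewrite inE.
Qed.

Lemma lex (s : seq T) : forall S : set PT, compact S -> S !=set0 ->
  exists S' : set PT, [/\ compact S', S' !=set0, S' `<=` S, face S S' &
    forall x a b, x \in s -> S' a -> S' b -> a x = b x].
Proof.
elim: s => [|x s IH] S cS S0.
  exists S; split => //; by move=> a b t Sa Sb _ Sm.
have [m [cS1 S10 fS1 _]] := @argmax_step S (ind x) cS S0.
have [S' [cS' S'0 S'S1 fS' eqS']] := IH _ cS1 S10.
exists S'; split => //.
- by move=> p /S'S1 [].
- move=> a b t Sa Sb t01 Sm.
  have [S1a S1b] := fS1 a b t Sa Sb t01 (S'S1 _ Sm).
  exact: fS' a b t S1a S1b t01 Sm.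
- move=> y a b; rewrite in_cons => /orP[/eqP -> | ys] S'a S'b.
    have [_ ea] := S'S1 _ S'a; have [_ eb] := S'S1 _ S'b.
    by move: ea eb; rewrite /= !lprev_ind => -> ->.
  exact: eqS'.
Qed.

Lemma extreme_max (S : set PT) h : compact S -> S !=set0 ->
  exists a, extreme_points S a /\ forall p, S p -> lprev p h <= lprev a h.
Proof.
move=> cS S0.
have [m [cS1 S10 fS1 mmax]] := @argmax_step S h cS S0.
have [S' [cS' [a S'a] S'S1 fS' eqS']] := @lex (enum T) _ cS1 S10.
have [Sa ea] := S'S1 _ S'a.
exists a; split; last by move=> p Sp; rewrite ea; exact: mmax.
split => // q r t Sq Sr t01 aE.
have S1a : (S `&` [set p | lprev p h = m]) (mix t q r) by rewrite -aE; exact: S'S1.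
have [S1q S1r] := fS1 q r t Sq Sr t01 S1a.
have S'm : S' (mix t q r) by rewrite -aE.
have [S'q S'r] := fS' q r t S1q S1r t01 S'm.
by apply: funext => x; apply: eqS' => //; rewrite mem_enum.
Qed.


Lemma lprev1 (p : T -> R) : lprev p (fun=> 1) = \sum_x p x.
Proof. by apply: eq_bigr => x _; rewrite mulr1. Qed.

Lemma compact_face (K : set (T -> R)) PK f :
  compact (credal_face K PK f : set PT).
Proof.
apply: (@subclosed_compact PT _ [set p : PT | forall x, `[0, 1]%classic (p x)]); last first.
- move=> p [[pp _] _] x; have := @pmf_le1 p x pp.
  by rewrite /= in_itv /=.
- exact: compact_box.
have -> : (credal_face K PK f : set PT) =
  (\bigcap_(x in setT) [set p : PT | 0 <= lprev p (ind x)]) `&`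
  [set p : PT | 1 <= lprev p (fun=> 1)] `&`
  [set p : PT | lprev p (fun=> 1) <= 1] `&`
  (\bigcap_(g in K) [set p : PT | PK g <= lprev p g]) `&`
  [set p : PT | lprev p f = natext K PK f].
  apply/seteqP; split => p.
    move=> [[[p0 p1] pK] pf]; rewrite /= lprev1 p1 lexx; split => //.
    split; last by move=> g Kg; exact: pK.
    split => //; split => // x _; rewrite /= lprev_ind; exact: p0.
  move=> [[[[p0 p1] p2] pK] pf]; split => //; split.
    split; first by move=> x; have := p0 x I; rewrite /= lprev_ind.
    by apply/eqP; rewrite eq_le -!lprev1 p1 p2.
  by move=> g Kg; exact: pK.
apply: closedI; last exact: closed_lin_eq.
apply: closedI; last by apply: closed_bigI => g _; exact: closed_lin_le.
apply: closedI.
  apply: closedI; first by apply: closed_bigI => x _; exact: closed_lin_le.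
  exact: closed_lin_le.
have H := (@preimage_closed PT R (fun p : PT => lprev p (fun=> 1)) [set x | x <= 1]
  (fun x _ => lprev_cont _ x) (@closed_le R 1)).
exact H.
Qed.

End Aux.

Theorem corollary6 (R : realType) (T : finType)
    (K : set (T -> R)) (PK P P' : (T -> R) -> R) :
  finite_set K -> K !=set0 ->
  coherent_on K PK ->
  coherent_on setT P -> coherent_on setT P' ->
  (forall f, K f -> P f = PK f) ->
  (forall f, K f -> P' f = PK f) ->
  forall h : T -> R,
    `| P h - P' h | <=
      inf [set sup [set lprev q h | q in extreme_points (credal_face K PK f)]
          | f in K] - natext K PK h.
Proof.
move=> _ [f0 Kf0] [CK [CKpmf _ _ _ HK]] cohP cohP' PKP PKP' h.
set B := \sum_x `|h x|.
have bd : forall p : T -> R, pmf p -> - B <= lprev p h <= B.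
  by move=> p pp; rewrite -ler_norml; exact: lprev_bound.
have CKcr : forall p, CK p -> credal K PK p.
  move=> p CKp; split; first exact: CKpmf.
  by move=> g Kg; exact: (HK g Kg).2 p CKp.
have Hnat : forall f, K f -> natext K PK f = PK f.
  move=> f Kf; have [p CKp pe] := (HK f Kf).1.
  have lb : lbound [set lprev p f | p in credal K PK] (PK f).
    by move=> y [q [_ qK] <-]; exact: qK f Kf.
  apply/eqP; rewrite eq_le; apply/andP; split.
    rewrite -pe; apply: ge_inf; first by exists (PK f).
    by exists p => //; exact: CKcr.
  by apply: lb_le_inf => //; exists (lprev p f), p => //; exact: CKcr.
have claim : forall Q : (T -> R) -> R, coherent_on setT Q ->
    (forall f, K f -> Q f = PK f) ->
    natext K PK h <= Q h /\ forall f, K f ->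
      Q h <= sup [set lprev q h | q in extreme_points (credal_face K PK f)].
  move=> Q [C [Cpmf _ _ _ HQ]] QK.
  have Csub : forall p, C p -> credal K PK p.
    move=> p Cp; split; first exact: Cpmf.
    by move=> g Kg; rewrite -QK //; exact: (HQ g I).2 p Cp.
  split.
    have [p Cp pe] := (HQ h I).1; rewrite -pe; apply: ge_inf.
      exists (- B) => y [q [qp _] <-]; by have /andP[] := bd q qp.
    by exists p => //; exact: Csub.
  move=> f Kf; have [p1 Cp1 e1] := (HQ f I).1.
  have Fp1 : credal_face K PK f p1.
    by split; [exact: Csub | rewrite e1 QK // Hnat].
  have [a [ea amax]] := @extreme_max R T (credal_face K PK f) h
    (@compact_face R T K PK f) (ex_intro _ p1 Fp1).
  apply: le_trans ((HQ h I).2 p1 Cp1) _.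
  apply: le_trans (amax p1 Fp1) _.
  apply: sup_upper_bound; last by exists a.
  split; first by exists (lprev a h), a.
  exists B => y [q [[[qp _] _] _] <-]; by have /andP[] := bd q qp.
have [NP UP] := claim P cohP PKP.
have [NP' UP'] := claim P' cohP' PKP'.
set X := inf _.
have XP : forall Q, (forall f, K f -> Q <= sup [set lprev q h | q in extreme_points (credal_face K PK f)]) -> Q <= X.
  move=> Q UQ; apply: lb_le_inf.
    by exists (sup [set lprev q h | q in extreme_points (credal_face K PK f0)]), f0.
  by move=> y [f Kf <-]; exact: UQ.
have := XP _ UP; have := XP _ UP'.
rewrite ler_norml => ? ?; apply/andP; split; lra.
Qed.
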